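(* Let $(X,T)$ be a topologically transitive Cantor system and let $0<\theta<1$ be such that $\exp(2\pi i\theta)$ is a continuous eigenvalue of $T$. If $f,g\in C(X,\mathbb Z)$ are such that $f-\theta\mathbf 1$ and $g-\theta\mathbf 1$ are real coboundaries, then $f-g$ is an integer coboundary, i.e. $f-g=h-h\circ T$ for some $h\in C(X,\mathbb Z)$.
   Context: A Cantor system is a homeomorphism $T$ of a compact metric totally disconnected space $X$ without isolated points; topologically transitive means some orbit is dense. A continuous eigenvalue is $\lambda$ with $F\circ T=\lambda F$ for some continuous $F:X\to\mathbb S^1$. A real coboundary is $F-F\circ T$ with $F\in C(X,\mathbb R)$. *)

(* Defs.v *)
From mathcomp Require Import all_boot all_algebra all_classical all_reals all_analysis.
Import GRing.Theory Num.Theory numFieldNormedType.Exports.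
Local Open Scope classical_set_scope.
Local Open Scope ring_scope.

Definition Zdisc := discrete_topology int.

Definition is_cantor_space {R : realType} (X : pseudoMetricType R) : Prop :=
  [/\ compact [set: X], hausdorff_space X, totally_disconnected [set: X]
    & forall x : X, ~ isolated [set: X] x].

Definition is_homeomorphism {X : topologicalType} (T : X -> X) : Prop :=
  continuous T /\ exists S : X -> X, [/\ continuous S, cancel T S & cancel S T].

Definition full_orbit {X : Type} (T : X -> X) (x : X) : set X :=
  [set y | exists n : nat, iter n T x = y \/ iter n T y = x].

Definition topologically_transitive {X : topologicalType} (T : X -> X) : Prop :=
  exists x : X, dense (full_orbit T x).

(** exp(2 pi i theta) is a continuous eigenvalue of T: there is a continuous
    F : X -> S^1 (S^1 viewed as the unit circle in C = R x R) with
    F (T x) = exp(2 pi i theta) * F x (complex multiplication written out). *)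
Definition continuous_eigenvalue_angle {R : realType} {X : topologicalType}
    (T : X -> X) (theta : R) : Prop :=
  exists F : X -> R * R,
    [/\ continuous F,
        forall x, (F x).1 ^+ 2 + (F x).2 ^+ 2 = 1
      & forall x, F (T x) =
          (cos (2 * pi * theta) * (F x).1 - sin (2 * pi * theta) * (F x).2,
           sin (2 * pi * theta) * (F x).1 + cos (2 * pi * theta) * (F x).2)].

Definition real_coboundary {R : realType} {X : topologicalType}
    (T : X -> X) (u : X -> R) : Prop :=
  exists F : X -> R, continuous F /\ forall x, u x = F x - F (T x).

Definition int_coboundary {X : topologicalType} (T : X -> X) (u : X -> int) : Prop :=
  exists h : X -> Zdisc, continuous h /\ forall x, u x = h x - h (T x).

(* Main.v *)
Require Import Defs.
From mathcomp Require Import all_boot all_algebra all_classical all_reals all_analysis.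
From mathcomp Require Import zify lra.
Import order.Order.TTheory GRing.Theory Num.Theory numFieldNormedType.Exports.
Local Open Scope classical_set_scope.
Local Open Scope ring_scope.

Lemma int_small (R : realType) (m : int) : `|(m%:~R : R)| < 1 -> m = 0.
Proof.
rewrite -intr_norm -[1 : R]/((1:int)%:~R) ltr_int.
move=> /ltr_normlP [h1 h2]; lia.
Qed.

Theorem mainTheorem8 (R : realType) (X : pseudoMetricType R) (T : X -> X)
    (theta : R) (f g : X -> Zdisc) :
  is_cantor_space X -> is_homeomorphism T -> topologically_transitive T ->
  0 < theta < 1 -> continuous_eigenvalue_angle T theta ->
  continuous f -> continuous g ->
  real_coboundary T (fun x => (f x)%:~R - theta) ->
  real_coboundary T (fun x => (g x)%:~R - theta) ->
  int_coboundary T (fun x => f x - g x).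
Proof.
move=> _ _ [x0 dense0] _ _ _ _ [F1 [cF1 eF1]].
move=> [F2 [cF2 eF2]].
pose H y := F1 y - F2 y.
have cH : continuous H by move=> y; exact: (continuousB (cF1 y) (cF2 y)).
have eH : forall w, H w - H (T w) = (f w - g w)%:~R.
  by move=> w; rewrite /H intrB; have := eF1 w; have := eF2 w; lra.
have iterH : forall n w, exists m : int, H w - H (iter n T w) = m%:~R.
  elim=> [|n IH] w; first by exists 0; rewrite /= subrr.
  have [m hm] := IH w; exists (m + (f (iter n T w) - g (iter n T w))).
  rewrite /= intrD -eH -hm; lra.
pose K y := H y - H x0.
have orbK : forall z, full_orbit T x0 z -> exists m : int, K z = m%:~R.
  move=> z [n [<-|hz]].
    have [m hm] := iterH n x0; exists (- m); rewrite /K intrN -hm; lra.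
  have [m hm] := iterH n z; exists m; rewrite /K -hm hz //.
have cK : continuous K.
  move=> y; apply: (@cvgB _ _ _ _ _ H (fun=> H x0)); [exact: cH|exact: cvg_cst].
have approx : forall y (eps : R), 0 < eps -> exists m : int, `|K y - m%:~R| < eps.
  move=> y eps e0.
  have Ny : \forall z \near y, `|K z - K y| < eps.
    by apply: cvgr_distC_lt => //; exact: cK.
  have [z [zi zo]] := dense0 _ (ex_intro _ y Ny) (@open_interior _ _).
  have [m hm] := orbK z zo; exists m; rewrite -hm distrC.
  exact: (interior_subset zi).
have intK : forall y, exists m : int, K y = m%:~R.
  move=> y; have [n1 hn1] := approx y (1/2) ltac:(lra).
  exists n1; apply/eqP; apply/negPn/negP => hne.
  have hpos : 0 < `|K y - n1%:~R| by rewrite normr_gt0 subr_eq0.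
  have [n2 hn2] := approx y (Num.min `|K y - n1%:~R| (1/2)) ltac:(rewrite lt_min hpos; lra).
  move: hn2; rewrite lt_min => /andP [h21 h22].
  have e12 : n1 = n2.
    apply/eqP; rewrite -subr_eq0; apply/eqP; apply: (@int_small R).
    rewrite intrB.
    have := ler_normB (K y - n2%:~R) (K y - n1%:~R).
    have -> : K y - n2%:~R - (K y - n1%:~R) = n1%:~R - n2%:~R :> R by lra.
    lra.
  by move: h21; rewrite e12 ltxx.
have [h hh] := choice intK.
exists h; split; last first.
  move=> x; apply/eqP; rewrite -(eqr_int R) !intrB -!hh; apply/eqP.
  have := eH x; rewrite intrB /K; lra.
move=> y; apply/discrete_cvg.
rewrite /=.
have N : \forall z \near y, `|K z - K y| < 1/2.
  apply: cvgr_distC_lt; [exact: cK|lra].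
apply: filterS N => z hz /=.
apply/eqP; rewrite -subr_eq0; apply/eqP; apply: (@int_small R).
rewrite intrB -!hh; lra.
Qed.
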